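(* Let $1\le k\le n-1$, $d=n-1$, $h=1$, $\alpha=M/k$, and $\beta=\alpha'=\frac{M}{k(d-k+2)}$ (assumed a positive integer). Then, for a sufficiently large finite field $\mathrm{GF}(q)$, there exist linear codes for the system $\mathrm{DSS}(n,k,d,1,\alpha,\alpha',\beta,M)$ (linear storage codes on the complete nodes and on the repairing node, and linear repair combinations) such that, when a complete node fails and each of the $d$ surviving complete nodes and the repairing node transmits $\beta$ packets to the new node, the reconstruction property is preserved: any $k$ complete nodes of the resulting system can recover the file.
   Context: $\mathrm{DSS}(n,k,d,h,\alpha,\alpha',\beta,M)$: a file of $M$ packets over $\mathrm{GF}(q)$ is stored on $n$ complete storage nodes of capacity $\alpha$ each (each node stores $\alpha$ linear combinations of the file packets) so that any $k$ of them reconstruct the file (reconstruction property); in addition there are $h$ repairing storage nodes of capacity $\alpha'<\alpha$, which are never contacted by data collectors. When a complete node fails, a new node is created from $\beta$ packets (linear combinations of stored data) received from each of $d$ surviving complete nodes and from each of the $h$ repairing nodes; repair is functional (the new node need not equal the failed one). *)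

(* Defs.v *)
From HB Require Import structures.
From mathcomp Require Import all_boot all_order all_algebra all_field.
Set Implicit Arguments. Unset Strict Implicit. Unset Printing Implicit Defensive.
Import GRing.Theory.
Local Open Scope ring_scope.

(* A node storing a packets is represented by an a x M matrix over F whose rows
   are the coding vectors (coefficients w.r.t. the M file packets) of the
   stored linear combinations. *)

Definition reconstructs (F : fieldType) (n k alpha M : nat)
    (C : 'I_n -> 'M[F]_(alpha, M)) : Prop :=
  forall S : {set 'I_n}, #|S| = k ->
    (1%:M <= \sum_(j in S) <<C j>>)%MS.

(* Contents of the new node created when complete node i fails, built from the
   helper set D of surviving complete nodes and all h repairing nodes R:
   helper j sends beta packets B j *m C j, repairing node l sends Br l *m R l,
   and the new node stores linear combinations of the received packets. *)
Definition new_node (F : fieldType) (n h alpha alpha' beta M : nat)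
    (C : 'I_n -> 'M[F]_(alpha, M)) (R : 'I_h -> 'M[F]_(alpha', M))
    (D : {set 'I_n})
    (B : 'I_n -> 'M[F]_(beta, alpha)) (A : 'I_n -> 'M[F]_(alpha, beta))
    (Br : 'I_h -> 'M[F]_(beta, alpha')) (Ar : 'I_h -> 'M[F]_(alpha, beta))
    : 'M[F]_(alpha, M) :=
  \sum_(j in D) A j *m (B j *m C j) + \sum_(l < h) Ar l *m (Br l *m R l).

Definition replace_node (F : fieldType) (n alpha M : nat)
    (C : 'I_n -> 'M[F]_(alpha, M)) (i : 'I_n) (N : 'M[F]_(alpha, M))
    : 'I_n -> 'M[F]_(alpha, M) :=
  fun j => if j == i then N else C j.

(* Main.v *)
Require Import Defs.
From HB Require Import structures.
From mathcomp Require Import all_boot all_order all_algebra all_field.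
From mathcomp Require Import mxabelem zify.
Set Implicit Arguments. Unset Strict Implicit. Unset Printing Implicit Defensive.
Import GRing.Theory.
Local Open Scope ring_scope.

Lemma vec_avoid (F : finFieldType) (L : finType) (p m : nat)
  (X : 'M[F]_(p, m)) (W : L -> 'M[F]_m) :
  (#|L| < #|F|)%N ->
  exists x : 'rV[F]_p, forall l, ~~ (X <= W l)%MS -> ~~ (x *m X <= W l)%MS.
Proof.
move=> hL.
pose P l := ~~ (X <= W l)%MS.
have [l0 Pl0|P0] := pickP P; last first.
  by exists 0 => l; rewrite /P in P0; rewrite P0.
have p_gt0 : (0 < p)%N.
  case: (posnP p) => // p0; move: Pl0; rewrite /P.
  have : X == 0 by rewrite -mxrank_eq0 -leqn0 -p0 rank_leq_row.
  by move/eqP->; rewrite sub0mx.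
pose bad l := rowg (kermx (X *m cokermx (W l))).
have badE (l : L) (x : 'rV[F]_p) : (x \in bad l) = (x *m X <= W l)%MS.
  rewrite mem_rowg; apply/sub_kermxP/idP => [h|].
    by rewrite submxE -mulmxA; apply/eqP; exact: h.
  by rewrite submxE -mulmxA => /eqP h; exact: h.
have cbad l : P l -> (#|bad l| <= #|F| ^ p.-1)%N.
  move=> Pl; rewrite card_rowg mxrank_ker.
  have: (0 < \rank (X *m cokermx (W l)))%N.
    by rewrite lt0n mxrank_eq0; apply: contra Pl => /eqP h; rewrite submxE h.
  have := finNzRing_gt1 F => h1 h2.
  apply: leq_pexp2l; lia.
have [x /forallP Hx|none] := pickP (fun x : 'rV[F]_p => [forall l, P l ==> ~~ (x *m X <= W l)%MS]).
  by exists x => l Pl; move/implyP: (Hx l); apply.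
exfalso.
have H1 : (#|F| ^ p <= \sum_(l | P l) #|bad l|)%N.
  have -> : (#|F| ^ p = #|{: 'rV[F]_p}|)%N by rewrite card_mx mul1n.
  rewrite -sum1_card.
  rewrite (eq_bigr (fun l => \sum_(x : 'rV[F]_p) (x \in bad l : nat))); last first.
    by move=> l _; rewrite -sum1_card big_mkcond /=; apply: eq_bigr => x _; case: (x \in bad l).
  rewrite (exchange_big_dep predT) //=; apply: leq_sum => x _.
  have := none x; move/negbT/forallPn => [l]; rewrite negb_imply negbK => /andP[Pl bl].
  rewrite (bigD1 l) ?Pl //= (_ : x \in bad l = true) //; by rewrite badE.
have H2 : (\sum_(l | P l) #|bad l| <= #|L| * #|F| ^ p.-1)%N.
  apply: leq_trans (_ : \sum_(l | P l) #|F| ^ p.-1 <= _)%N.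
    by apply: leq_sum => l Pl; apply: cbad.
  rewrite sum_nat_const; apply: leq_mul => //; apply: max_card.
have H3 : (#|F| ^ p = #|F| * #|F| ^ p.-1)%N by rewrite -expnS prednK.
have H4 : (0 < #|F| ^ p.-1)%N by rewrite expn_gt0; have := finNzRing_gt1 F; lia.
nia.
Qed.

Lemma block_choose (F : finFieldType) (L : finType) (r p m : nat)
  (X : 'M[F]_(p, m)) (W : L -> 'M[F]_m) :
  (#|L| < #|F|)%N ->
  exists Y : 'M[F]_(r, p), forall l,
    (minn (\rank (W l) + r) (\rank (W l + X)%MS) <= \rank (W l + Y *m X)%MS)%N.
Proof.
move=> hL; elim: r => [|r [Y0 IH]].
  exists 0 => l; apply: leq_trans (geq_minl _ _) _; rewrite addn0.
  exact: mxrankS (addsmxSl _ _).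
have [x Hx] := vec_avoid X (fun l => (W l + Y0 *m X)%MS) hL.
exists (col_mx x Y0 : 'M_(1 + r, p)) => l.
have -> : \rank (W l + col_mx x Y0 *m X)%MS = \rank (W l + Y0 *m X + x *m X)%MS.
  rewrite mul_col_mx -(adds_eqmx (eqmx_refl _) (addsmxE _ _)).1.
  by rewrite -addsmxA (addsmxC (x *m X)).
set W' := (W l + Y0 *m X)%MS.
have IHl := IH l.
have sWW' : (W l <= W')%MS by apply: addsmxSl.
case: (boolP (X <= W')%MS) => sXW.
  apply: leq_trans (geq_minr _ _) _; apply: mxrankS.
  by rewrite addsmx_sub (submx_trans sWW') ?(submx_trans sXW) ?addsmxSl.
have := Hx l sXW => nxX.
have : (\rank W' < \rank (W' + x *m X)%MS)%N.
  rewrite ltn_neqAle mxrankS ?addsmxSl // andbT.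
  apply: contra nxX => /eqP e.
  have := mxrank_leqif_sup (addsmxSl W' (x *m X)); rewrite e => -[_].
  by rewrite eqxx => /esym; rewrite addsmx_sub => /andP[].
move=> h; move: (IH l); rewrite -/W'; lia.
Qed.

Lemma count_index_enum (T : finType) (P : pred T) :
  count P (index_enum T) = #|P|.
Proof. by rewrite -size_filter deprecated_filter_index_enum -cardE. Qed.

Lemma rank_adds_le (F : fieldType) m1 m2 n (A : 'M[F]_(m1, n)) (B : 'M[F]_(m2, n)) :
  (\rank (A + B)%MS <= \rank A + \rank B)%N.
Proof. exact: (mxrank_adds_leqif A B).1. Qed.

Lemma rank_addsC (F : fieldType) m1 m2 n (A : 'M[F]_(m1, n)) (B : 'M[F]_(m2, n)) :
  \rank (A + B)%MS = \rank (B + A)%MS.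
Proof. by rewrite addsmxC. Qed.

Lemma rank_adds_gen (F : fieldType) m1 m2 n (A : 'M[F]_(m1, n)) (B : 'M[F]_(m2, n)) :
  \rank (A + <<B>>)%MS = \rank (A + B)%MS.
Proof. exact: (adds_eqmx (eqmx_refl A) (genmxE B)).1. Qed.

Lemma rank_mono (F : fieldType) m1 m2 n (A : 'M[F]_(m1, n)) (B : 'M[F]_(m2, n)) :
  (A <= B)%MS -> (\rank A <= \rank B)%N.
Proof. exact: mxrankS. Qed.

Definition Vs (F : fieldType) n a M (C : 'I_n -> 'M[F]_(a, M)) (X : {set 'I_n}) : 'M[F]_M :=
  (\sum_(j in X) <<C j>>)%MS.

Lemma Vs_setU1 (F : fieldType) n a M (C : 'I_n -> 'M[F]_(a, M)) (X : {set 'I_n}) (j : 'I_n) :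
  j \notin X -> Vs C (j |: X) = (<<C j>> + Vs C X)%MS.
Proof. by move=> jX; rewrite /Vs big_setU1. Qed.

Lemma rank_full (F : fieldType) m M (A : 'M[F]_(m, M)) :
  \rank (A + 1%:M)%MS = M.
Proof.
apply/eqP; rewrite eqn_leq rank_leq_col /=.
by rewrite -{1}(mxrank1 F M) mxrankS // addsmxSr.
Qed.

Lemma rank_sw3 (F : fieldType) m1 m2 m3 n (A : 'M[F]_(m1, n)) (B : 'M[F]_(m2, n)) (C : 'M[F]_(m3, n)) :
  \rank (A + (<<B>> + C))%MS = \rank (A + C + B)%MS.
Proof.
apply/eqmx_rank/andP; split; rewrite !addsmx_sub ?genmxE.
  rewrite (submx_trans (addsmxSl A C) (addsmxSl _ B)) addsmxSr /=.
  exact: (submx_trans (addsmxSr A C) (addsmxSl _ B)).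
rewrite addsmxSl /=.
rewrite (submx_trans (addsmxSr (<<B>>%MS) C) (addsmxSr A _)) /=.
by rewrite -(genmxE B) (submx_trans (addsmxSl (<<B>>%MS) C) (addsmxSr A _)).
Qed.

Lemma rank_sw2 (F : fieldType) m2 m3 n (B : 'M[F]_(m2, n)) (C : 'M[F]_(m3, n)) :
  \rank (<<B>> + C)%MS = \rank (C + B)%MS.
Proof. by rewrite addsmxC rank_adds_gen. Qed.

Lemma init_config (F : finFieldType) (n k a b M : nat) :
  M = (k * a)%N -> (b <= a)%N -> (1 <= k)%N ->
  (2 * #|{set 'I_n}| < #|F|)%N ->
  exists (C : 'I_n -> 'M[F]_(a, M)) (R0 : 'M[F]_(b, M)),
   (forall S : {set 'I_n}, #|S| = k -> (M <= \rank (Vs C S))%N) /\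
   (forall X : {set 'I_n}, #|X|.+1 = k -> (b + #|X| * a <= \rank (R0 + Vs C X)%MS)%N).
Proof.
move=> hM hba hk hF.
have hL1 : (#|{: unit}| < #|F|)%N by rewrite card_unit; have := finNzRing_gt1 F.
have [R0 HR] := block_choose b (1%:M : 'M[F]_M) (fun _ : unit => 0 : 'M[F]_M) hL1.
have hL2 : (#|{: bool * {set 'I_n}}| < #|F|)%N by rewrite card_prod card_bool.
have main : forall s : seq 'I_n, uniq s -> exists C : 'I_n -> 'M[F]_(a, M),
  forall X : {set 'I_n},
   (minn (b + a * count (fun j => j \in X) s) (b + k.-1 * a) <=
      \rank (R0 + \sum_(j <- s | j \in X) <<C j>>)%MS)%N /\
   (minn (a * count (fun j => j \in X) s) M <=
      \rank (\sum_(j <- s | j \in X) <<C j>>)%MS)%N.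
  elim => [_|j s IH] /=.
    exists (fun _ => 0) => X; rewrite !big_nil /= muln0 addn0; split; last first.
      by rewrite minnC minn0.
    have := HR tt; rewrite mulmx1 mxrank0 add0n rank_full.
    rewrite (adds0mx _ R0).1 (addsmx0 _ R0).1.
    have : (b <= M)%N by rewrite hM; nia.
    lia.
  move=> /andP[js us]; have [C' HC'] := IH us.
  pose T (X : {set 'I_n}) := (\sum_(j' <- s | j' \in X) <<C' j'>>)%MS.
  have [Y HY] := block_choose a (1%:M : 'M[F]_M)
    (fun bx : bool * {set 'I_n} => if bx.1 then (R0 + T bx.2)%MS else T bx.2) hL2.
  exists (fun j' => if j' == j then Y else C' j') => X.
  have eT : (\sum_(j' <- s | j' \in X) <<if j' == j then Y else C' j'>>)%MS = T X.
    rewrite /T [LHS]big_seq_cond [RHS]big_seq_cond; apply: eq_bigr => j' /andP[j's _].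
    by case: eqP => // e; move: j's; rewrite e (negPf js).
  rewrite big_cons eqxx eT.
  have [IH1 IH2] := HC' X; rewrite -/(T X) in IH1 IH2.
  have hcap : (b + k.-1 * a <= M)%N by rewrite hM; nia.
  case: (boolP (j \in X)) => jX /=; last first.
    by rewrite add0n; split.
  have := HY (true, X); have := HY (false, X); rewrite /= !mulmx1 !rank_full.
  rewrite rank_sw3 rank_sw2.
  move=> h1 h2; rewrite mulnDr muln1.
  have -> : count (in_mem^~ (mem X)) s = count (fun j => j \in X) s by [].
  split; lia.
have [C HC] := main (index_enum 'I_n) (index_enum_uniq _).
exists C, R0; split.
  move=> S hS; have := (HC S).2; rewrite count_index_enum.
  rewrite -/(Vs C S) (_ : #|[pred j | j \in S]| = #|S|) ?hS //.
  by move=> h; apply: leq_trans h; rewrite leq_min leqnn andbT hM mulnC.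
move=> X hX; have := (HC X).1; rewrite count_index_enum.
rewrite -/(Vs C X) (_ : #|[pred j | j \in X]| = #|X|) //.
by move=> h; apply: leq_trans h; rewrite leq_min -hX /= (mulnC a) !leqnn.
Qed.

Definition I1 (F : fieldType) n k a M (C : 'I_n -> 'M[F]_(a, M)) :=
  forall S : {set 'I_n}, #|S| = k -> (M <= \rank (Vs C S))%N.
Definition I2 (F : fieldType) n k a b M (C : 'I_n -> 'M[F]_(a, M)) (R0 : 'M[F]_(b, M)) :=
  forall X : {set 'I_n}, #|X|.+1 = k -> (b + #|X| * a <= \rank (R0 + Vs C X)%MS)%N.

Lemma I2' (F : fieldType) n k a b M (C : 'I_n -> 'M[F]_(a, M)) (R0 : 'M[F]_(b, M)) :
  (k <= n)%N -> I2 k C R0 ->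
  forall X : {set 'I_n}, #|X|.+2 = k -> (b + #|X| * a <= \rank (R0 + Vs C X)%MS)%N.
Proof.
move=> hkn h2 X hX.
have : (0 < #|~: X|)%N by rewrite cardsCs setCK card_ord; lia.
case/card_gt0P => j; rewrite inE => jX.
have := h2 (j |: X); rewrite cardsU1 jX /= add1n => /(_ hX).
rewrite Vs_setU1 // rank_sw3.
have := rank_adds_le (R0 + Vs C X)%MS (C j); have := rank_leq_row (C j).
lia.
Qed.

Lemma cap_lemma (F : fieldType) n k a b M (C : 'I_n -> 'M[F]_(a, M)) (R0 : 'M[F]_(b, M))
   (X : {set 'I_n}) (j : 'I_n) m (W : 'M[F]_(m, M)) :
  I1 k C -> I2 k C R0 -> j \notin X -> (R0 + Vs C X <= W)%MS ->
  (#|X|.+1 = k -> (M <= \rank (W + C j)%MS)%N) /\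
  (#|X|.+2 = k -> (b + k.-1 * a <= \rank (W + C j)%MS)%N).
Proof.
move=> h1 h2 jX sW.
have s1 : (R0 + Vs C (j |: X) <= W + C j)%MS.
  rewrite Vs_setU1 // !addsmx_sub genmxE addsmxSr /=.
  have := sW; rewrite addsmx_sub => /andP[sR sV].
  rewrite (submx_trans sR (addsmxSl _ _)) (submx_trans sV (addsmxSl _ _)) //.
have c1 : #|j |: X| = #|X|.+1 by rewrite cardsU1 jX.
split => hX.
  apply: leq_trans (h1 (j |: X) _) _; first by rewrite c1.
  apply: mxrankS; apply: submx_trans s1; exact: addsmxSr.
have := h2 (j |: X); rewrite c1 => /(_ hX) hh.
apply: leq_trans (mxrankS s1); apply: leq_trans hh; rewrite -hX /=; lia.
Qed.


Lemma arith_cap (v b cap r0 r1 r2 : nat) :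
  (minn (r0 + b) r2 <= r1)%N -> (minn v cap <= r0)%N -> (cap <= r2)%N ->
  (minn (v + b) cap <= r1)%N.
Proof. lia. Qed.

Lemma step1 (F : finFieldType) n k a b M (C : 'I_n -> 'M[F]_(a, M)) (R0 : 'M[F]_(b, M))
   (D : {set 'I_n}) :
  (k <= n)%N -> (b + k.-1 * a <= M)%N ->
  (2 * #|{set 'I_n}| < #|F|)%N -> I1 k C -> I2 k C R0 ->
  forall s : seq 'I_n, uniq s -> exists B : 'I_n -> 'M[F]_(b, a),
  forall X : {set 'I_n}, (#|X|.+1 = k \/ #|X|.+2 = k) ->
   (minn (b + #|X| * a + b * count (fun j => (j \in D) && (j \notin X)) s)
         (if #|X|.+1 == k then M else b + k.-1 * a) <=
    \rank (R0 + Vs C X + \sum_(j <- s | j \in D) <<B j *m C j>>)%MS)%N.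
Proof.
move=> hkn hcap hF h1 h2.
have hL : (#|{: {set 'I_n}}| < #|F|)%N by lia.
elim => [_|j s IH] /=.
  exists (fun _ => 0) => X hX; rewrite big_nil muln0 addn0 (addsmx0 _ (R0 + Vs C X)%MS).1.
  apply: leq_trans (geq_minl _ _) _.
  case: hX => hX; [exact: h2 X hX | exact: I2' hkn h2 X hX].
move=> /andP[js us]; have [B' HB'] := IH us.
pose T (X : {set 'I_n}) := (\sum_(j' <- s | j' \in D) <<B' j' *m C j'>>)%MS.
have [Y HY] := block_choose b (C j) (fun X => (R0 + Vs C X + T X)%MS) hL.
exists (fun j' => if j' == j then Y else B' j') => X hX.
have eT : (\sum_(j' <- s | j' \in D) <<(if j' == j then Y else B' j') *m C j'>>)%MS = T X.
  rewrite /T [LHS]big_seq_cond [RHS]big_seq_cond; apply: eq_bigr => j' /andP[j's _].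
  by case: eqP => // e; move: j's; rewrite e (negPf js).
rewrite big_cons eqxx eT.
have IHX := HB' X hX; rewrite -/(T X) in IHX.
have -> : count (fun j0 => (j0 \in D) && (j0 \notin X)) s =
          count (fun j => (j \in D) && (j \notin X)) s by [].
set c := count _ s in IHX *.
case: (boolP (j \in D)) => jD /=; last by rewrite add0n.
rewrite rank_sw3.
have HYX := HY X; rewrite /= in HYX.
case: (boolP (j \in X)) => jX /=.
  rewrite add0n; apply: leq_trans IHX _; apply: mxrankS; exact: addsmxSl.
have [c1 c2] := cap_lemma h1 h2 jX (addsmxSl (R0 + Vs C X)%MS (T X)).
case: hX => hX.
  rewrite mulnDr muln1 (addnC b (b * c)) addnA hX eqxx in IHX *.
  exact: arith_cap HYX IHX (c1 hX).
have hne : (#|X|.+1 == k) = false by rewrite -hX eqn_leq ltnn andbF.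
rewrite mulnDr muln1 (addnC b (b * c)) addnA hne in IHX *.
exact: arith_cap HYX IHX (c2 hX).
Qed.

Lemma Vs_rep_notin (F : fieldType) n a M (C : 'I_n -> 'M[F]_(a, M)) i N (X : {set 'I_n}) :
  i \notin X -> Vs (replace_node C i N) X = Vs C X.
Proof.
move=> iX; apply: eq_bigr => j jX; rewrite /replace_node.
by case: eqP => // e; move: jX; rewrite e (negPf iX).
Qed.

Lemma Vs_rep_in (F : fieldType) n a M (C : 'I_n -> 'M[F]_(a, M)) i N (X : {set 'I_n}) :
  i \in X -> Vs (replace_node C i N) X = (<<N>> + Vs C (X :\ i))%MS.
Proof.
move=> iX; rewrite -{1}(setD1K iX) Vs_setU1 ?setD11 // Vs_rep_notin ?setD11 //.
by rewrite /replace_node eqxx.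
Qed.

Lemma sub3a (F : fieldType) m1 m2 m3 n (R : 'M[F]_(m1, n)) (V : 'M[F]_(m2, n)) (S : 'M[F]_(m3, n)) :
  (R + V + S <= V + (S + R))%MS.
Proof.
rewrite !addsmx_sub (submx_trans (addsmxSr S R) (addsmxSr V _)) addsmxSl /=.
exact: (submx_trans (addsmxSl S R) (addsmxSr V _)).
Qed.

Lemma sub3b (F : fieldType) m1 m2 m3 n (R : 'M[F]_(m1, n)) (V : 'M[F]_(m2, n)) (S : 'M[F]_(m3, n)) :
  (R + V + S <= R + V + (S + R))%MS.
Proof.
rewrite addsmx_sub addsmxSl /=.
exact: (submx_trans (addsmxSl S R) (addsmxSr _ _)).
Qed.

Lemma card_DX (n : nat) (D X : {set 'I_n}) :
  X \subset D -> #|[pred j | (j \in D) && (j \notin X)]| = (#|D| - #|X|)%N.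
Proof.
move=> sXD; have e : D :&: X = X by apply/setIidPr.
rewrite -{2}e -cardsD.
by apply: eq_card => j; rewrite !inE andbC.
Qed.

Lemma ar1 x n k a b : x.+1 = k -> (k <= n - 1)%N -> a = ((n - k + 1) * b)%N ->
  (k * a <= b + x * a + b * (n - 1 - x))%N.
Proof.
move=> <- hk ha; have e : (n - x.+1 + 1 = (n - 1 - x).+1)%N by lia.
rewrite e in ha; move: ha; set y := (n - 1 - x)%N => ->; nia.
Qed.

Lemma ar2 x n k a b : x.+2 = k -> (k <= n - 1)%N -> a = ((n - k + 1) * b)%N ->
  (b + k.-1 * a <= b + x * a + b * (n - 1 - x))%N.
Proof.
move=> <- hk ha; have e : (n - x.+2 + 1 = (n - 1 - x))%N by lia.
rewrite e in ha; move: ha; set y := (n - 1 - x)%N => ->; rewrite /=; nia.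
Qed.

Lemma arI1 (x a b M rV rU rN rRS rR : nat) : M = (x.+1 * a)%N ->
  (minn (rV + a) rU <= rN)%N -> (rRS <= rU)%N -> (rR <= b + rV)%N ->
  (b + x * a <= rR)%N -> (M <= rRS)%N -> (M <= rN)%N.
Proof. rewrite mulSn; lia. Qed.

Lemma arI2 (x a b rR rU rN rRS : nat) :
  (minn (rR + a) rU <= rN)%N -> (rRS <= rU)%N -> (b + x * a <= rR)%N ->
  (b + x.+1 * a <= rRS)%N -> (b + x.+1 * a <= rN)%N.
Proof. rewrite mulSn; lia. Qed.

Lemma repair (F : finFieldType) n k a b M (C : 'I_n -> 'M[F]_(a, M)) (R0 : 'M[F]_(b, M))
   (i : 'I_n) (D : {set 'I_n}) :
  M = (k * a)%N -> a = ((n - k + 1) * b)%N -> (1 <= k)%N -> (k <= n - 1)%N ->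
  (2 * #|{set 'I_n}| < #|F|)%N -> I1 k C -> I2 k C R0 -> i \notin D -> #|D| = (n - 1)%N ->
  exists (B : 'I_n -> 'M[F]_(b, a)) (A : 'I_n -> 'M[F]_(a, b)) (Ar : 'M[F]_(a, b)),
   I1 k (replace_node C i (\sum_(j in D) A j *m (B j *m C j) + Ar *m R0)) /\
   I2 k (replace_node C i (\sum_(j in D) A j *m (B j *m C j) + Ar *m R0)) R0.
Proof.
move=> hM ha hk hkn hF h1 h2 iD cD.
have hDc : forall x, x != i -> x \in D.
  have : D \subset [set~ i] by apply/subsetP => x xD; rewrite !inE; apply/eqP => e; move: iD; rewrite -e xD.
  move=> sD; have : D == [set~ i] by rewrite eqEcard sD cardsC1 card_ord cD subn1 leqnn.
  by move/eqP => -> x; rewrite !inE.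
have hkn' : (k <= n)%N by lia.
have hcap : (b + k.-1 * a <= M)%N by rewrite hM; nia.
have [B HB] := step1 D hkn' hcap hF h1 h2 (index_enum_uniq 'I_n).
set Sg := (\sum_(j in D) <<B j *m C j>>)%MS.
have hb : forall X : {set 'I_n}, X \subset D ->
   (#|X|.+1 = k -> (M <= \rank (R0 + Vs C X + Sg)%MS)%N) /\
   (#|X|.+2 = k -> (b + k.-1 * a <= \rank (R0 + Vs C X + Sg)%MS)%N).
  move=> X sXD; split => hX.
    have := HB X (or_introl hX); rewrite count_index_enum card_DX // cD hX eqxx.
    rewrite -/Sg => h; apply: leq_trans h; rewrite hM.
    by rewrite leq_min leqnn andbT; apply: ar1.
  have := HB X (or_intror hX); rewrite count_index_enum card_DX // cD.
  have -> : (#|X|.+1 == k) = false by rewrite -hX eqn_leq ltnn andbF.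
  rewrite -/Sg => h; apply: leq_trans h.
  by rewrite leq_min leqnn andbT; apply: ar2.
have hL : (#|{: {set 'I_n}}| < #|F|)%N by lia.
set U := (Sg + R0)%MS.
have [Y HY] := block_choose a U
   (fun X : {set 'I_n} => if #|X|.+1 == k then Vs C X else (R0 + Vs C X)%MS) hL.
have : (Y *m U <= Sg + R0)%MS by apply: submxMl.
case/sub_addsmxP => u eN.
have : (u.1 *m Sg <= \sum_(j in D) <<B j *m C j>>)%MS by apply: submxMl.
case/sub_sums_genmxP => v ev.
exists B, v, u.2.
have -> : (\sum_(j in D) v j *m (B j *m C j) + u.2 *m R0) = Y *m U by rewrite eN ev.
set N := Y *m U.
have hRV : forall X : {set 'I_n}, (\rank (R0 + Vs C X)%MS <= b + \rank (Vs C X))%N.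
  move=> X; apply: leq_trans (rank_adds_le _ _) _; rewrite leq_add2r; exact: rank_leq_row.
split.
  move=> S hS; case: (boolP (i \in S)) => iS; last first.
    by rewrite Vs_rep_notin //; apply: h1.
  rewrite Vs_rep_in // rank_sw2.
  set X := S :\ i.
  have cX : #|X|.+1 = k by rewrite -hS (cardsD1 i S) iS.
  have sXD : X \subset D by apply/subsetP => x; rewrite !inE => /andP[/hDc].
  have := HY X; rewrite cX eqxx => hy.
  have := (hb X sXD).1 cX; have := h2 X cX; have := hRV X.
  have := mxrankS (sub3a R0 (Vs C X) Sg).
  move=> q1 q2 q3 q4; apply: (arI1 _ hy q1 q2 q3 q4).
  by rewrite hM -cX.
move=> X hX; case: (boolP (i \in X)) => iX; last first.
  by rewrite Vs_rep_notin //; apply: h2.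
rewrite Vs_rep_in // rank_sw3.
set X' := X :\ i.
have cX : #|X'|.+2 = k by rewrite -hX (cardsD1 i X) iX.
have sXD : X' \subset D by apply/subsetP => x; rewrite !inE => /andP[/hDc].
have := HY X'; rewrite (_ : (#|X'|.+1 == k) = false); last first.
  by rewrite -cX eqn_leq ltnn andbF.
move=> hy.
have q1 := mxrankS (sub3b R0 (Vs C X') Sg).
have q2 := I2' hkn' h2 cX.
have q3 := (hb X' sXD).2 cX; rewrite -cX /= in q3.
rewrite (cardsD1 i X) iX add1n.
exact: (arI2 hy q1 q2 q3).
Qed.


Theorem proposition3 (n k d h M alpha alpha' beta : nat) :
  (1 <= k)%N -> (k <= n - 1)%N -> d = (n - 1)%N -> h = 1%N ->
  (0 < beta)%N -> M = (k * (d - k + 2) * beta)%N ->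
  (alpha * k)%N = M -> alpha' = beta ->
  exists Q : nat, forall F : finFieldType, (Q <= #|F|)%N ->
  exists Inv : ('I_n -> 'M[F]_(alpha, M)) -> ('I_h -> 'M[F]_(alpha', M)) -> Prop,
    (exists C R, Inv C R) /\
    (forall C R, Inv C R -> reconstructs k C) /\
    (forall C R, Inv C R ->
       forall (i : 'I_n) (D : {set 'I_n}), i \notin D -> #|D| = d ->
       exists (B : 'I_n -> 'M[F]_(beta, alpha)) (A : 'I_n -> 'M[F]_(alpha, beta))
              (Br : 'I_h -> 'M[F]_(beta, alpha')) (Ar : 'I_h -> 'M[F]_(alpha, beta)),
         Inv (replace_node C i (new_node C R D B A Br Ar)) R).
Proof.
move=> hk hkn hd hh hb hM haM ha'; subst d h alpha'.
have e1 : (n - 1 - k + 2 = n - k + 1)%N by lia.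
rewrite e1 in hM.
have ha : alpha = ((n - k + 1) * beta)%N.
  apply/eqP; rewrite -(@eqn_pmul2l k) //; apply/eqP; rewrite mulnC haM hM mulnA //.
have hM' : M = (k * alpha)%N by rewrite -haM mulnC.
have hba : (beta <= alpha)%N by rewrite ha; nia.
exists (2 * #|{set 'I_n}|).+1 => F hF.
exists (fun C R => I1 k C /\ I2 k C (R ord0)).
split.
  have [C [R0 [h1 h2]]] := init_config hM' hba hk hF.
  by exists C, (fun _ => R0).
split.
  move=> C R [h1 _] S hS; rewrite sub1mx /row_full eqn_leq rank_leq_col /=.
  exact: h1 S hS.
move=> C R [h1 h2] i D iD cD.
have [B [A [Ar [H1 H2]]]] := repair hM' ha hk hkn hF h1 h2 iD cD.
exists B, A, (fun _ => 1%:M), (fun _ => Ar).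
have -> : new_node C R D B A (fun _ => 1%:M) (fun _ => Ar) =
          \sum_(j in D) A j *m (B j *m C j) + Ar *m R ord0.
  by rewrite /new_node big_ord1 mul1mx.
by split.
Qed.
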